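(* Let $R$ be a finite commutative local Frobenius ring with residue field $\mathbb{F}_q$. For $i=1,2$, let $C_i$ be a free linear code of length $n$ over $R$ with generator matrix $\mathrm{G}_i$ and parity check matrix $\mathrm{H}_i$, such that $C_1+C_2=R^n$. Then the following are equivalent: (1) $C_1$ and $C_2$ form an LCP; (2) $\begin{pmatrix}\mathrm{G}_1\\ \mathrm{G}_2\end{pmatrix}$ is invertible over $R$; (3) $\begin{pmatrix}\mathrm{H}_1\\ \mathrm{H}_2\end{pmatrix}$ is invertible over $R$; (4) $\texttt{Rank}_q(\mathrm{H}_2\mathrm{G}_1^\top)=\texttt{Rank}_q(\mathrm{G}_1)$ or $\texttt{Rank}_q(\mathrm{H}_1\mathrm{G}_2^\top)=\texttt{Rank}_q(\mathrm{G}_2)$.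
   Context: A linear code of length $n$ over $R$ is an $R$-submodule of $R^n$; free means free as an $R$-module. A pair $\{C_1,C_2\}$ is a linear complementary pair (LCP) if $C_1\cap C_2=\{\mathbf{0}\}$ and $C_1+C_2=R^n$. A generator matrix of a free code is a matrix whose rows form a basis of the code; a parity check matrix of $C$ is a generator matrix of $C^\perp$ with respect to the standard inner product $\sum_j u_jc_j$. For a matrix $\mathrm{A}$ over $R$, $\texttt{Rank}_q(\mathrm{A}):=\log_q|M|$ where $M$ is the $R$-submodule spanned by the rows of $\mathrm{A}$. *)

(* Defs.v *)
From HB Require Import structures.
From mathcomp Require Import all_boot all_order all_algebra all_field.
Set Implicit Arguments. Unset Strict Implicit. Unset Printing Implicit Defensive.
Import GRing.Theory.
Local Open Scope ring_scope.

(* A commutative ring is local iff its non-units form an ideal,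
   i.e. the non-units are closed under addition (the set of non-units is then
   the unique maximal ideal). *)
Definition is_local_ring (R : finComUnitRingType) : Prop :=
  forall x y : R, x \isn't a GRing.unit -> y \isn't a GRing.unit ->
    x + y \isn't a GRing.unit.

Definition max_ideal (R : finComUnitRingType) : {set R} :=
  [set x : R | x \isn't a GRing.unit].

(* Size q of the residue field R/m (index of m in (R,+)). *)
Definition residue_card (R : finComUnitRingType) : nat :=
  (#|R| %/ #|max_ideal R|)%N.

(* Finite Frobenius ring: (R,+) admits a generating character, i.e. an
   additive character chi : (R,+) -> C^x whose kernel contains no nonzero
   ideal. *)
Definition is_frobenius (R : finComUnitRingType) : Prop :=
  exists chi : R -> algC,
    [/\ chi 0 = 1,
        (forall x y : R, chi (x + y) = chi x * chi y) &
        (forall a : R, a != 0 -> exists r : R, chi (r * a) != 1)].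

Definition rowspan (R : finComUnitRingType) (m n : nat) (A : 'M[R]_(m, n))
  : {set 'rV[R]_n} := [set x *m A | x : 'rV[R]_m].

Definition rows_free (R : finComUnitRingType) (m n : nat) (A : 'M[R]_(m, n))
  : Prop := forall x : 'rV[R]_m, x *m A = 0 -> x = 0.

Definition is_generator_matrix (R : finComUnitRingType) (k n : nat)
  (G : 'M[R]_(k, n)) (C : {set 'rV[R]_n}) : Prop :=
  rows_free G /\ rowspan G = C.

Definition dual_code (R : finComUnitRingType) (n : nat) (C : {set 'rV[R]_n})
  : {set 'rV[R]_n} :=
  [set u : 'rV[R]_n | [forall c in C, u *m c^T == 0]].

Definition is_linear_code (R : finComUnitRingType) (n : nat)
  (C : {set 'rV[R]_n}) : Prop :=
  0 \in C /\ forall (a : R) (u v : 'rV[R]_n), u \in C -> v \in C -> a *: u + v \in C.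

Definition code_sum (R : finComUnitRingType) (n : nat)
  (C1 C2 : {set 'rV[R]_n}) : {set 'rV[R]_n} :=
  [set x + y | x in C1, y in C2].

Definition is_LCP (R : finComUnitRingType) (n : nat)
  (C1 C2 : {set 'rV[R]_n}) : Prop :=
  C1 :&: C2 = [set 0] /\ code_sum C1 C2 = [set: 'rV[R]_n].

Definition mx_invertible (R : finComUnitRingType) (p r : nat)
  (A : 'M[R]_(p, r)) : Prop :=
  exists B : 'M[R]_(r, p), A *m B = 1%:M /\ B *m A = 1%:M.

(* Rank_q(A) = log_q |rowspan A|  (|rowspan A| is always a power of q). *)
Definition Rank_q (R : finComUnitRingType) (m n : nat) (A : 'M[R]_(m, n))
  : nat := trunc_log (residue_card R) #|rowspan A|.

(* Main.v *)
Require Import Defs.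
From HB Require Import structures.
From mathcomp Require Import all_boot all_order all_algebra all_field.
From mathcomp Require Import zify.
Import GRing.Theory.
Local Open Scope ring_scope.

Lemma cardR_gt1 (R : finComUnitRingType) : (1 < #|R|)%N.
Proof.
rewrite (cardD1 (0:R)) inE ltnS lt0n; apply/pred0Pn; exists (1:R).
by rewrite !inE oner_neq0.
Qed.

Lemma local_1plus (R : finComUnitRingType) (HR : is_local_ring R) (a : R) :
  a \isn't a GRing.unit -> (1 - a) \is a GRing.unit.
Proof.
move=> Ha; apply/negPn/negP => Hb.
have := HR _ _ Hb Ha; rewrite subrK unitr1; by [].
Qed.

Lemma socle_exists (R : finComUnitRingType) (HR : is_local_ring R) :
  exists s : R, s != 0 /\ forall a : R, a \isn't a GRing.unit -> s * a = 0.
Proof.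
pose I (s : R) := [set s * r | r : R].
have nz1 : (1 : R) != 0 by exact: oner_neq0.
case: (@arg_minnP R 1 (fun s => s != 0) (fun s : R => #|I s|) nz1) => s Hs Hmin.
exists s; split => // a Ha; apply/eqP/negPn/negP => Hsa.
have sub : I (s * a) \subset I s.
  apply/subsetP => x /imsetP [r _ ->]; apply/imsetP; exists (a * r) => //.
  by rewrite mulrA.
have := Hmin _ Hsa => le.
have /eqP eqI : I (s * a) == I s by rewrite eqEcard sub le.
have : s \in I (s * a) by rewrite eqI; apply/imsetP; exists 1; rewrite ?mulr1.
case/imsetP => r _ Hr.
have Hu : (1 - a * r) \is a GRing.unit.
  apply: local_1plus => //; rewrite unitrM negb_and Ha //.
have : s * (1 - a * r) = 0 by rewrite mulrBr mulr1 mulrA -Hr subrr.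
move/(congr1 (fun x => x * (1 - a * r)^-1)); rewrite -mulrA mulrV // mulr1 mul0r.
by move=> s0; move: Hs; rewrite s0 eqxx.
Qed.

Lemma free_surj (R : finComUnitRingType) (HR : is_local_ring R) (n k : nat) :
  forall G : 'M[R]_(k, n), rows_free G ->
  forall y : 'cV[R]_k, exists u : 'cV[R]_n, G *m u = y.
Proof.
have [s [s0 Hs]] := @socle_exists R HR.
elim: k => [|k IH] G Hfree y.
  by exists 0; apply/matrixP => -[].
pose G1 : 'M[R]_(1 + k, n) := G.
pose g := usubmx G1; pose G' := dsubmx G1.
have GE : G1 = col_mx g G' by rewrite vsubmxK.
have [j Hj] : exists j, g 0 j \is a GRing.unit.
  case/boolP: [exists j, g 0 j \is a GRing.unit] => [/existsP //|].
  rewrite negb_exists => /forallP Hall; exfalso.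
  have : row_mx (s%:M : 'M_1) (0 : 'M_(1,k)) *m G1 = 0.
    rewrite GE mul_row_col mul0mx addr0 mul_scalar_mx.
    apply/matrixP => a b; rewrite !mxE (ord1 a) Hs //.
    by have := Hall b; rewrite /g mxE.
  move=> H0; have /eqP : row_mx (s%:M : 'M_1) (0 : 'M_(1,k)) = 0 :> 'rV_(1+k) := Hfree _ H0.
  rewrite row_mx_eq0 => /andP [/eqP H _].
  by move: s0; have := congr1 (fun M : 'M_1 => M 0 0) H; rewrite !mxE /= mulr1n => ->; rewrite eqxx.
pose u := g 0 j.
pose e : 'cV[R]_n := delta_mx j 0.
have ge : g *m e = u%:M by rewrite -colE [LHS]mx11_scalar mxE.
pose c : 'cV[R]_k := u^-1 *: (G' *m e).
pose G'' := G' - c *m g.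
have G''e : G'' *m e = 0.
  rewrite mulmxBl -mulmxA ge mul_mx_scalar /c scalerA mulrV // scale1r.
  by rewrite subrr.
have free'' : rows_free G''.
  move=> x Hx; have : row_mx (- (x *m c)) x *m G1 = 0.
    rewrite GE mul_row_col mulNmx addrC.
    by move: Hx; rewrite /G'' mulmxBr mulmxA.
  move=> H0; have /eqP : row_mx (- (x *m c)) x = 0 :> 'rV_(1+k) := Hfree _ H0.
  by rewrite row_mx_eq0 => /andP [_ /eqP].
pose y1 : 'cV[R]_(1 + k) := y.
have [w Hw] := IH G'' free'' (dsubmx y1 - c *m usubmx y1).
pose t : 'M[R]_1 := u^-1 *: (usubmx y1 - g *m w).
exists (w + e *m t).
have gv : g *m (w + e *m t) = usubmx y1.
  rewrite mulmxDr mulmxA ge mul_scalar_mx /t scalerA mulrV // scale1r.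
  by rewrite addrC subrK.
have G'v : G' *m (w + e *m t) = dsubmx y1.
  have -> : G' = G'' + c *m g by rewrite /G'' subrK.
  rewrite mulmxDl -mulmxA gv mulmxDr mulmxA G''e mul0mx addr0 Hw subrK //.
change (G1 *m (w + e *m t) = y1).
rewrite GE mul_col_mx gv G'v vsubmxK //.
Qed.

Lemma free_inj (R : finComUnitRingType) (m n : nat) (A : 'M[R]_(m, n)) :
  rows_free A -> injective (fun x : 'rV[R]_m => x *m A).
Proof.
move=> HA x y /= Hxy; apply/eqP; rewrite -subr_eq0; apply/eqP/HA.
by rewrite mulmxBl Hxy subrr.
Qed.

Lemma card_rowspan (R : finComUnitRingType) (m n : nat) (A : 'M[R]_(m, n)) :
  rows_free A -> #|rowspan A| = (#|R| ^ m)%N.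
Proof.
move=> HA; rewrite /rowspan card_imset; last exact: free_inj.
by rewrite card_mx mul1n.
Qed.

Lemma dual_gen (R : finComUnitRingType) (k n : nat) (G : 'M[R]_(k, n))
  (C : {set 'rV[R]_n}) : is_generator_matrix G C ->
  dual_code C = [set u : 'rV[R]_n | u *m G^T == 0].
Proof.
move=> [_ HC]; apply/setP => u; rewrite !inE.
apply/forallP/idP => [H|/eqP H c].
  apply/eqP/matrixP => a i; rewrite (ord1 a) mxE.
  have := H (delta_mx 0 i *m G); rewrite -HC.
  have -> : delta_mx 0 i *m G \in rowspan G by apply/imsetP; exists (delta_mx 0 i).
  rewrite /= trmx_mul mulmxA trmx_delta -colE => /eqP /matrixP /(_ 0 0).
  by rewrite !mxE.
apply/implyP; rewrite -HC => /imsetP [x _ ->].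
by rewrite trmx_mul mulmxA H mul0mx.
Qed.

Lemma kernel_count (R : finComUnitRingType) (HR : is_local_ring R) (k n : nat)
  (G : 'M[R]_(k, n)) : rows_free G ->
  (#|R| ^ n = #|R| ^ k * #|[set u : 'rV[R]_n | u *m G^T == 0%R]|)%N.
Proof.
move=> HG.
have surj : forall y : 'rV[R]_k, exists u : 'rV[R]_n, u *m G^T = y.
  move=> y; have [v Hv] := @free_surj R HR _ _ _ HG y^T.
  by exists v^T; rewrite -trmx_mul Hv trmxK.
pose K := [set u : 'rV[R]_n | u *m G^T == 0].
pose sec (y : 'rV[R]_k) := odflt 0 [pick u : 'rV[R]_n | u *m G^T == y].
have secP : forall y, sec y *m G^T = y.
  move=> y; rewrite /sec; case: pickP => [u /eqP //|H].
  by have [u Hu] := surj y; move: (H u); rewrite Hu eqxx.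
pose F (p : 'rV[R]_k * 'rV[R]_n) := sec p.1 + p.2.
have inj : {in setX setT K &, injective F}.
  move=> [y1 z1] [y2 z2]; rewrite !inE /= => /eqP Hz1 /eqP Hz2.
  rewrite /F /= => E.
  have Ey : y1 = y2.
    by have := congr1 (fun v => v *m G^T) E; rewrite /= !mulmxDl Hz1 Hz2 !addr0 !secP.
  by move: E; rewrite Ey => /addrI ->.
have im : F @: setX setT K = setT.
  apply/setP => v; rewrite inE; apply/imsetP; exists (v *m G^T, v - sec (v *m G^T)).
    by rewrite !inE /= mulmxBl secP subrr eqxx.
  by rewrite /F /= addrC subrK.
have := card_in_imset inj; rewrite im cardsX cardsT !cardsT card_mx mul1n.
by rewrite card_mx mul1n.
Qed.

Lemma dim_dual (R : finComUnitRingType) (HR : is_local_ring R) (k m n : nat)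
  (G : 'M[R]_(k, n)) (H : 'M[R]_(m, n)) (C : {set 'rV[R]_n}) :
  is_generator_matrix G C -> is_generator_matrix H (dual_code C) ->
  (k + m = n)%N.
Proof.
move=> HG [HHf HHs].
have := @kernel_count R HR _ _ _ HG.1; rewrite -(@dual_gen R _ _ _ _ HG) -HHs (@card_rowspan R _ _ _ HHf) // -expnD.
by move/eqP; rewrite eqn_exp2l ?cardR_gt1 // => /eqP.
Qed.

Lemma inv_iff (R : finComUnitRingType) (p r : nat) (A : 'M[R]_(p, r)) :
  mx_invertible A <->
  injective (fun x : 'rV[R]_p => x *m A) /\ forall y : 'rV[R]_r, exists x, x *m A = y.
Proof.
split.
  move=> [B [AB BA]]; split.
    by move=> x y /= /(congr1 (mulmx^~ B)); rewrite -!mulmxA AB !mulmx1.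
  by move=> y; exists (y *m B); rewrite -mulmxA BA mulmx1.
move=> [inj surj].
pose sec (y : 'rV[R]_r) := odflt 0 [pick x : 'rV[R]_p | x *m A == y].
have secP : forall y, sec y *m A = y.
  move=> y; rewrite /sec; case: pickP => [u /eqP //|H].
  by have [u Hu] := surj y; move: (H u); rewrite Hu eqxx.
pose B := \matrix_(i < r) sec (delta_mx 0 i).
have BA : B *m A = 1%:M.
  by apply/row_matrixP => i; rewrite row_mul rowK secP row1.
exists B; split => //.
apply/row_matrixP => i; apply: inj => /=.
by rewrite -!row_mul -mulmxA BA mulmx1 mul1mx.
Qed.

Lemma q_bounds (R : finComUnitRingType) (HR : is_local_ring R) :
  (1 < residue_card R)%N /\ (residue_card R <= #|R|)%N.
Proof.
split; last exact: leq_div.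
rewrite /residue_card.
have M0 : (0 : R) \in max_ideal R by rewrite inE unitr0.
have Mpos : (0 < #|max_ideal R|)%N by apply/card_gt0P; exists 0.
rewrite leq_divRL //.
pose N := [set x + 1 | x in max_ideal R].
have cN : #|N| = #|max_ideal R| by rewrite card_imset //; exact: addIr.
have disj : max_ideal R :&: N = set0.
  apply/setP => x; rewrite !inE; apply/negP => /andP [Hx /imsetP [y Hy Exy]].
  move: Hy; rewrite inE => Hy.
  have Hy' : - y \isn't a GRing.unit by rewrite unitrN.
  have := HR _ _ Hx Hy'.
  by rewrite Exy addrAC subrr add0r unitr1.
have := max_card (max_ideal R :|: N); rewrite cardsU disj cards0 subn0 cN.
by rewrite mul2n -addnn.
Qed.

Lemma trunc_log_lt (q a b : nat) : (1 < q)%N -> (0 < a)%N -> (q * a <= b)%N ->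
  (trunc_log q a < trunc_log q b)%N.
Proof.
move=> q1 a0 le; apply: trunc_log_max => //.
rewrite expnS; apply: leq_trans le; rewrite leq_mul2l; apply/orP; right.
exact: trunc_logP.
Qed.

Lemma surj_inj_iff (R : finComUnitRingType) (p r : nat) (A : 'M[R]_(p, r)) :
  (forall y : 'rV[R]_r, exists x, x *m A = y) ->
  (injective (fun x : 'rV[R]_p => x *m A) <-> p = r).
Proof.
move=> surj.
have im : [set x *m A | x : 'rV[R]_p] = setT.
  apply/setP => y; rewrite inE; have [x <-] := surj y; exact: imset_f.
split => [inj|pr].
  have : #|[set x *m A | x : 'rV[R]_p]| = (#|R| ^ p)%N.
    by rewrite card_imset // ?cardsT card_mx mul1n.
  rewrite im cardsT card_mx mul1n => /esym.
  by move/eqP; rewrite eqn_exp2l ?cardR_gt1 // => /eqP.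
have im' : [set x *m A | x in [set: 'rV[R]_p]] = setT.
  apply/setP => y; rewrite inE; have [x <-] := surj y; apply: imset_f; exact: in_setT.
have : #|[set x *m A | x in [set: 'rV[R]_p]]| == #|[set: 'rV[R]_p]|.
  by rewrite im' !cardsT !card_mx pr.
move/imset_injP => inj x y E; apply: inj => //; exact: in_setT.
Qed.

Lemma inj_surj_iff (R : finComUnitRingType) (p r : nat) (A : 'M[R]_(p, r)) :
  injective (fun x : 'rV[R]_p => x *m A) ->
  ((forall y : 'rV[R]_r, exists x, x *m A = y) <-> p = r).
Proof.
move=> inj.
have c : #|[set x *m A | x : 'rV[R]_p]| = (#|R| ^ p)%N.
  by rewrite card_imset // ?cardsT card_mx mul1n.
split => [surj|pr].
  have im : [set x *m A | x : 'rV[R]_p] = setT.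
    apply/setP => y; rewrite inE; have [x <-] := surj y; exact: imset_f.
  move: c; rewrite im cardsT card_mx mul1n.
  by move/eqP; rewrite eqn_exp2l ?cardR_gt1 // => /eqP ->.
have im : [set x *m A | x : 'rV[R]_p] == setT.
  rewrite eqEcard subsetT c.
by rewrite /= cardsT card_mx mul1n pr.
by move=> y; move/eqP: im => /setP /(_ y); rewrite inE => /imsetP [x _ ->]; exists x.
Qed.

Lemma rank_eq (R : finComUnitRingType) (HR : is_local_ring R) (m k : nat) :
  (m <= k)%N ->
  trunc_log (residue_card R) (#|R| ^ m) = trunc_log (residue_card R) (#|R| ^ k) ->
  m = k.
Proof.
move=> le E; have [lt'|ge] := ltnP m k; last by lia.
exfalso.
have [q1 qR] := @q_bounds R HR.
have : (trunc_log (residue_card R) (#|R| ^ m) < trunc_log (residue_card R) (#|R| ^ k))%N.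
  apply: trunc_log_lt => //; first by rewrite expn_gt0; have := cardR_gt1 R; lia.
  apply: leq_trans (leq_mul qR (leqnn _)) _; rewrite -expnS leq_exp2l //; exact: cardR_gt1.
by rewrite E ltnn.
Qed.

Theorem corollary3p18 (R : finComUnitRingType)
  (HRloc : is_local_ring R) (HRfrob : is_frobenius R)
  (n k1 k2 m1 m2 : nat) (C1 C2 : {set 'rV[R]_n})
  (G1 : 'M[R]_(k1, n)) (G2 : 'M[R]_(k2, n))
  (H1 : 'M[R]_(m1, n)) (H2 : 'M[R]_(m2, n))
  (HC1 : is_linear_code C1) (HC2 : is_linear_code C2)
  (HG1 : is_generator_matrix G1 C1) (HG2 : is_generator_matrix G2 C2)
  (HH1 : is_generator_matrix H1 (dual_code C1))
  (HH2 : is_generator_matrix H2 (dual_code C2))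
  (Hsum : code_sum C1 C2 = [set: 'rV[R]_n]) :
  [/\ (is_LCP C1 C2 <-> mx_invertible (col_mx G1 G2)),
      (is_LCP C1 C2 <-> mx_invertible (col_mx H1 H2)) &
      (is_LCP C1 C2 <->
         (Rank_q (H2 *m G1^T) = Rank_q G1 \/ Rank_q (H1 *m G2^T) = Rank_q G2))].
Proof.
have d1 := @dim_dual R HRloc _ _ _ _ _ _ HG1 HH1.
have d2 := @dim_dual R HRloc _ _ _ _ _ _ HG2 HH2.
have mulE : forall p1 p2 (A1 : 'M[R]_(p1, n)) (A2 : 'M[R]_(p2, n)) (x : 'rV[R]_(p1 + p2)),
    x *m col_mx A1 A2 = lsubmx x *m A1 + rsubmx x *m A2.
  by move=> p1 p2 A1 A2 x; rewrite -{1}(hsubmxK x) mul_row_col.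
have genE : forall k (G : 'M[R]_(k, n)) C, is_generator_matrix G C ->
    forall c, c \in C -> exists x, c = x *m G.
  by move=> k G C [_ <-] c /imsetP [x _ ->]; exists x.
have genI : forall k (G : 'M[R]_(k, n)) C, is_generator_matrix G C ->
    forall x, x *m G \in C.
  by move=> k G C [_ <-] x; apply: imset_f.
have dual0 : forall u, u \in dual_code C1 -> u \in dual_code C2 -> u = 0.
  move=> u; rewrite !inE => /forallP D1 /forallP D2.
  apply/matrixP => a i; rewrite (ord1 a) mxE.
  have : delta_mx 0 i \in code_sum C1 C2 by rewrite Hsum inE.
  case/imset2P => c1 c2 c1C c2C Ev.
  have := congr1 (fun v => u *m v^T) Ev.
  rewrite /= trmx_delta -colE linearD /= mulmxDr.
  move: (D1 c1) (D2 c2); rewrite c1C c2C /= => /eqP -> /eqP ->.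
  by rewrite addr0 => /matrixP /(_ 0 0); rewrite !mxE.
have surjG : forall y : 'rV[R]_n, exists x, x *m col_mx G1 G2 = y.
  move=> y; have : y \in code_sum C1 C2 by rewrite Hsum inE.
  case/imset2P => c1 c2 c1C c2C ->.
  have [x1 ->] := genE _ _ _ HG1 _ c1C; have [x2 ->] := genE _ _ _ HG2 _ c2C.
  by exists (row_mx x1 x2); rewrite mul_row_col.
have LCP_inj : is_LCP C1 C2 <-> injective (fun x : 'rV[R]_(k1 + k2) => x *m col_mx G1 G2).
  split.
    move=> [I _]; apply: free_inj => x; rewrite mulE => E.
    have E' : lsubmx x *m G1 = (- rsubmx x) *m G2.
      by apply/eqP; rewrite mulNmx -addr_eq0 E.
    have : lsubmx x *m G1 \in C1 :&: C2 by rewrite inE genI // E' genI.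
    rewrite I inE => /eqP H0.
    have l0 := HG1.1 _ H0.
    have : rsubmx x *m G2 = 0 by move: E; rewrite H0 add0r.
    move/(HG2.1) => r0.
    by rewrite -(hsubmxK x) l0 r0 row_mx0.
  move=> inj; split => //.
  apply/setP => v; rewrite !inE; apply/andP/eqP => [[v1 v2]|->].
    have [x1 E1] := genE _ _ _ HG1 _ v1; have [x2 E2] := genE _ _ _ HG2 _ v2.
    have : row_mx x1 (- x2) = 0.
      apply: inj; rewrite /= mul_row_col mul0mx mulNmx -E1 -E2 subrr //.
    move/eqP; rewrite row_mx_eq0 => /andP [/eqP x10 _].
    by rewrite E1 x10 mul0mx.
  by split; [exact: HC1.1 | exact: HC2.1].
have LCPk : is_LCP C1 C2 <-> (k1 + k2 = n)%N.
  rewrite LCP_inj; exact: surj_inj_iff.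
have injH : injective (fun x : 'rV[R]_(m1 + m2) => x *m col_mx H1 H2).
  apply: free_inj => x; rewrite mulE => E.
  have E' : lsubmx x *m H1 = (- rsubmx x) *m H2.
    by apply/eqP; rewrite mulNmx -addr_eq0 E.
  have H0 : lsubmx x *m H1 = 0.
    by apply: dual0; [exact: genI | rewrite E'; exact: genI].
  have l0 := HH1.1 _ H0.
  have : rsubmx x *m H2 = 0 by move: E; rewrite H0 add0r.
  move/(HH2.1) => r0.
  by rewrite -(hsubmxK x) l0 r0 row_mx0.
have rk : forall k m (G : 'M[R]_(k, n)) (H : 'M[R]_(m, n)) Ca Cb,
    is_generator_matrix G Ca -> is_generator_matrix H (dual_code Cb) ->
    (forall u, u \in dual_code Ca -> u \in dual_code Cb -> u = 0) ->
    (Rank_q (H *m G^T) = Rank_q G <-> m = k).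
  move=> k m G H Ca Cb HG HH D0.
  have fr : rows_free (H *m G^T).
    move=> x; rewrite mulmxA => E; apply: HH.1; apply: D0; last exact: genI.
    by rewrite (@dual_gen R _ _ _ _ HG) inE E.
  have le : (m <= k)%N.
    have := max_card (rowspan (H *m G^T)).
    rewrite (@card_rowspan R _ _ _ fr) card_mx mul1n leq_exp2l //; exact: cardR_gt1.
  rewrite /Rank_q (@card_rowspan R _ _ _ fr) (@card_rowspan R _ _ _ HG.1); split.
    exact: (@rank_eq R HRloc).
  by move=> ->.
have D21 : forall u, u \in dual_code C1 -> u \in dual_code C2 -> u = 0 := dual0.
have D12 : forall u, u \in dual_code C2 -> u \in dual_code C1 -> u = 0.
  by move=> u a b; exact: dual0.
split.
- split; first by rewrite LCP_inj => inj; apply/inv_iff; split.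
  by move/inv_iff => [inj _]; apply/LCP_inj.
- rewrite LCPk inv_iff; split.
    move=> E; split => //; apply/(@inj_surj_iff R _ _ _ injH); lia.
  move=> [_ /(@inj_surj_iff R _ _ _ injH)]; lia.
- rewrite LCPk (rk _ _ _ _ _ _ HG1 HH2 D21) (rk _ _ _ _ _ _ HG2 HH1 D12).
  lia.
Qed.
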